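(* Let $W$ be a generalized contingent solution for (MOC), $(t,x)\in[0,T)\times\mathbb{R}^n$ and $y\in W(t,x)$. Assume $W$ is Lipschitz around $(t,x)$ and $y\in\mathcal{PE}(W(t,x),P)$. Then $$0\in\mathcal{E}\Big(\mathrm{cl}\Big(\bigcup_{(f,L)\in(\mathrm{FL})(x)}\big(L+D_\uparrow W((t,x,y);(1,f))\big)\Big),P\Big)+P.$$
   Context: Setting (MOC). Fix $T>0$, $I=[0,T]$, integers $n,m,p\ge1$, nonempty compact $U\subset\mathbb{R}^m$; $f:\mathbb{R}^n\times U\to\mathbb{R}^n$ and $L:\mathbb{R}^n\times U\to\mathbb{R}^p$ continuous, bounded, and Lipschitz in $x$ uniformly in $u$. $(\mathrm{FL})(x)=\mathrm{cl}\,\mathrm{co}\{(f(x,u),L(x,u)):u\in U\}$. Euclidean norms. $P\subset\mathbb{R}^p$: closed convex pointed cone containing $0$ with nonempty interior. $\mathcal{E}(S,P)=\{y\in S:(y-P)\cap S=\{y\}\}$; contingent cone $T_S(z)=\{v:\exists h_k\to0^+,\exists v_k\to v,z+h_kv_k\in S\}$; $\mathcal{PE}(S,P)=\{y\in\mathcal{E}(S,P):T_{S+P}(y)\cap(-P)=\{0\}\}$. For $W:I\times\mathbb{R}^n\rightrightarrows\mathbb{R}^p$, $W_\uparrow=W+P$; the contingent derivative $DW_\uparrow(t,x,y)$ is the set-valued map whose graph is $T_{\mathrm{gph}W_\uparrow}(t,x,y)$, its value at $(\tau,v)$ written $DW_\uparrow((t,x,y);(\tau,v))$; $D_\uparrow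 W((t,x,y);(\tau,v))=\mathcal{E}(DW_\uparrow((t,x,y);(\tau,v)),P)$. $W$ is Lipschitz around $(t,x)$ if there are $l>0$ and a neighborhood $\mathcal{O}$ with $W(z_1)\subset W(z_2)+l\|z_1-z_2\|\mathbf{B}$ for $z_1,z_2\in\mathcal{O}$. Extremal element map: for all $(t,x)$, $y\in W(t,x)$: $W(t,x)\cap(y-P)=\{y\}=W(t,x)\cap(y+P)$. Generalized contingent solution: an extremal element map $W$ with (i) for all $(t,x)\in[0,T)\times\mathbb{R}^n$, $y\in W(t,x)$, some $(\bar f,\bar L)\in(\mathrm{FL})(x)$ satisfies $-\bar L\in DW_\uparrow((t,x,y);(1,\bar f))$; (ii) for all $(t,x)\in(0,T]\times\mathbb{R}^n$, $y\in W(t,x)$, $(f,L)\in(\mathrm{FL})(x)$: $L\in DW_\uparrow((t,x,y);(-1,-f))$; (iii) $W(T,x)=\{0\}$. *)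

(* Defs.v *)
From Stdlib Require Import Reals List.
From Stdlib Require Fin.
Open Scope R_scope.

Definition vec (k : nat) := Fin.t k -> R.

Fixpoint fsum (k : nat) : (Fin.t k -> R) -> R :=
  match k with
  | O => fun _ => 0
  | S j => fun g => g Fin.F1 + fsum j (fun i => g (Fin.FS i))
  end.

Definition vzero {k} : vec k := fun _ => 0.
Definition vadd {k} (a b : vec k) : vec k := fun i => a i + b i.
Definition vopp {k} (a : vec k) : vec k := fun i => - a i.
Definition vsub {k} (a b : vec k) : vec k := fun i => a i - b i.
Definition vscal {k} (c : R) (a : vec k) : vec k := fun i => c * a i.
Definition vnorm2 {k} (a : vec k) : R := fsum k (fun i => a i * a i).
Definition vnorm {k} (a : vec k) : R := sqrt (vnorm2 a).

Definition pnorm {a b} (u : vec a) (v : vec b) : R := sqrt (vnorm2 u + vnorm2 v).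
Definition tnorm {a b} (s : R) (u : vec a) (v : vec b) : R :=
  sqrt (s * s + vnorm2 u + vnorm2 v).

Definition vcv {k} (w : nat -> vec k) (v : vec k) : Prop :=
  Un_cv (fun j => vnorm (vsub (w j) v)) 0.

Definition vcl {k} (S : vec k -> Prop) (z : vec k) : Prop :=
  forall eps, 0 < eps -> exists w, S w /\ vnorm (vsub z w) < eps.
Definition pcl {a b} (S : vec a * vec b -> Prop) (z : vec a * vec b) : Prop :=
  forall eps, 0 < eps -> exists w, S w /\
     pnorm (vsub (fst z) (fst w)) (vsub (snd z) (snd w)) < eps.

Definition pco {a b} (S : vec a * vec b -> Prop) (z : vec a * vec b) : Prop :=
  exists l : list (R * (vec a * vec b)),
    l <> nil /\
    (forall c, In c l -> 0 <= fst c /\ S (snd c)) /\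
    fold_right (fun c s => fst c + s) 0 l = 1 /\
    fst z = fold_right (fun c s => vadd (vscal (fst c) (fst (snd c))) s) vzero l /\
    snd z = fold_right (fun c s => vadd (vscal (fst c) (snd (snd c))) s) vzero l.

(* nonempty compact subset of R^m (Heine-Borel: closed and bounded) *)
Definition nonempty_compact {m} (U : vec m -> Prop) : Prop :=
  (exists u, U u) /\ (forall z, vcl U z -> U z) /\
  (exists M, forall u, U u -> vnorm u <= M).

Definition MOC_regular {n m k} (U : vec m -> Prop) (g : vec n -> vec m -> vec k) : Prop :=
  (forall x u, U u -> forall eps, 0 < eps -> exists d, 0 < d /\
      forall x' u', U u' -> pnorm (vsub x' x) (vsub u' u) < d ->
        vnorm (vsub (g x' u') (g x u)) < eps) /\
  (exists M, forall x u, U u -> vnorm (g x u) <= M) /\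
  (exists K, forall x x' u, U u ->
      vnorm (vsub (g x u) (g x' u)) <= K * vnorm (vsub x x')).

Definition FL {n m p} (U : vec m -> Prop) (f : vec n -> vec m -> vec n)
  (L : vec n -> vec m -> vec p) (x : vec n) : vec n * vec p -> Prop :=
  pcl (pco (fun z => exists u, U u /\ z = (f x u, L x u))).

Definition good_cone {p} (P : vec p -> Prop) : Prop :=
  P vzero /\
  (forall z, vcl P z -> P z) /\
  (forall a b, P a -> P b -> P (vadd a b)) /\
  (forall c a, 0 <= c -> P a -> P (vscal c a)) /\
  (forall a, P a -> P (vopp a) -> a = vzero) /\
  (exists c r, 0 < r /\ forall z, vnorm (vsub z c) < r -> P z).

Definition vsum_set {p} (S P : vec p -> Prop) (z : vec p) : Prop :=
  exists s q, S s /\ P q /\ z = vadd s q.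

Definition Eff {p} (S P : vec p -> Prop) (y : vec p) : Prop :=
  S y /\ forall z, S z -> (exists q, P q /\ z = vsub y q) -> z = y.

Definition Tcone {p} (S : vec p -> Prop) (z v : vec p) : Prop :=
  exists (h : nat -> R) (w : nat -> vec p),
    (forall j, 0 < h j) /\ Un_cv h 0 /\ vcv w v /\
    forall j, S (vadd z (vscal (h j) (w j))).

Definition PEff {p} (S P : vec p -> Prop) (y : vec p) : Prop :=
  Eff S P y /\
  forall v, Tcone (vsum_set S P) y v -> P (vopp v) -> v = vzero.

Definition Wup {n p} (P : vec p -> Prop) (W : R -> vec n -> vec p -> Prop)
  (t : R) (x : vec n) : vec p -> Prop := vsum_set (W t x) P.

(* graph of W_up, W being defined on I x R^n with I = [0,T] *)
Definition gphWup {n p} (T : R) (P : vec p -> Prop) (W : R -> vec n -> vec p -> Prop)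
  (t : R) (x : vec n) (y : vec p) : Prop :=
  0 <= t <= T /\ Wup P W t x y.

Definition Tgph {n p} (G : R -> vec n -> vec p -> Prop) (t : R) (x : vec n) (y : vec p)
  (tau : R) (v : vec n) (w : vec p) : Prop :=
  exists (h : nat -> R) (tauk : nat -> R) (vk : nat -> vec n) (wk : nat -> vec p),
    (forall j, 0 < h j) /\ Un_cv h 0 /\
    Un_cv (fun j => tnorm (tauk j - tau) (vsub (vk j) v) (vsub (wk j) w)) 0 /\
    forall j, G (t + h j * tauk j) (vadd x (vscal (h j) (vk j)))
                (vadd y (vscal (h j) (wk j))).

Definition DWup {n p} (T : R) (P : vec p -> Prop) (W : R -> vec n -> vec p -> Prop)
  (t : R) (x : vec n) (y : vec p) (tau : R) (v : vec n) : vec p -> Prop :=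
  Tgph (gphWup T P W) t x y tau v.

Definition DupW {n p} (T : R) (P : vec p -> Prop) (W : R -> vec n -> vec p -> Prop)
  (t : R) (x : vec n) (y : vec p) (tau : R) (v : vec n) : vec p -> Prop :=
  Eff (DWup T P W t x y tau v) P.

Definition extremal_map {n p} (T : R) (P : vec p -> Prop) (W : R -> vec n -> vec p -> Prop) : Prop :=
  forall t x y, 0 <= t <= T -> W t x y ->
    (forall z, W t x z -> (exists q, P q /\ z = vsub y q) -> z = y) /\
    (forall z, W t x z -> (exists q, P q /\ z = vadd y q) -> z = y).

Definition gen_contingent_solution {n m p} (T : R) (U : vec m -> Prop)
  (f : vec n -> vec m -> vec n) (L : vec n -> vec m -> vec p)
  (P : vec p -> Prop) (W : R -> vec n -> vec p -> Prop) : Prop :=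
  extremal_map T P W /\
  (forall t x y, 0 <= t < T -> W t x y ->
     exists fb Lb, FL U f L x (fb, Lb) /\ DWup T P W t x y 1 fb (vopp Lb)) /\
  (forall t x y, 0 < t <= T -> W t x y ->
     forall fv Lv, FL U f L x (fv, Lv) -> DWup T P W t x y (-1) (vopp fv) Lv) /\
  (forall x y, W T x y <-> y = vzero).

(* W Lipschitz around (t,x): neighbourhood taken as a ball in I x R^n *)
Definition lipschitz_around {n p} (T : R) (W : R -> vec n -> vec p -> Prop)
  (t : R) (x : vec n) : Prop :=
  exists l d, 0 < l /\ 0 < d /\
    forall t1 x1 t2 x2,
      0 <= t1 <= T -> 0 <= t2 <= T ->
      pnorm (fun _ : Fin.t 1 => t1 - t) (vsub x1 x) < d ->
      pnorm (fun _ : Fin.t 1 => t2 - t) (vsub x2 x) < d ->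
      forall y1, W t1 x1 y1 -> exists y2, W t2 x2 y2 /\
        vnorm (vsub y1 y2) <= l * pnorm (fun _ : Fin.t 1 => t1 - t2) (vsub x1 x2).

(* Main.v *)
Require Import Defs.
From Stdlib Require Import Reals List Lra Lia Psatz.
From Stdlib Require Import Classical ClassicalEpsilon FunctionalExtensionality.
From Stdlib Require Fin.
Open Scope R_scope.

Ltac vext := apply functional_extensionality; intro;
  unfold vadd, vsub, vopp, vscal, vzero; try ring.

Lemma fsum_ext k (g h : Fin.t k -> R) : (forall i, g i = h i) -> fsum k g = fsum k h.
Proof.
  revert g h; induction k; simpl; intros g h H; auto.
  rewrite H, (IHk (fun i => g (Fin.FS i)) (fun i => h (Fin.FS i))); auto.
Qed.

Lemma fsum_add k g h : fsum k (fun i => g i + h i) = fsum k g + fsum k h.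
Proof. revert g h; induction k; simpl; intros; [ring|]. rewrite IHk; ring. Qed.

Lemma fsum_scal k c g : fsum k (fun i => c * g i) = c * fsum k g.
Proof. revert g; induction k; simpl; intros; [ring|]. rewrite IHk; ring. Qed.

Lemma fsum_nonneg k g : (forall i, 0 <= g i) -> 0 <= fsum k g.
Proof. revert g; induction k; simpl; intros g H; [lra|].
  specialize (IHk (fun i => g (Fin.FS i)) (fun i => H _)). specialize (H Fin.F1). lra. Qed.

Lemma fsum_zero k g : (forall i, 0 <= g i) -> fsum k g = 0 -> forall i, g i = 0.
Proof.
  revert g; induction k; simpl; intros g H E i.
  - inversion i.
  - pose proof (fsum_nonneg k (fun i => g (Fin.FS i)) (fun i => H _)).
    pose proof (H Fin.F1).
    apply (Fin.caseS' i (fun i => g i = 0)).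
    + lra.
    + intro j. apply (IHk (fun i => g (Fin.FS i))); [intros; apply H| lra].
Qed.

Definition vdot {k} (a b : vec k) : R := fsum k (fun i => a i * b i).

Lemma vnorm2_ge0 {k} (a : vec k) : 0 <= vnorm2 a.
Proof. apply fsum_nonneg; intros; nra. Qed.

Lemma vnorm2_add {k} (a b : vec k) : vnorm2 (vadd a b) = vnorm2 a + 2 * vdot a b + vnorm2 b.
Proof.
  unfold vnorm2, vdot, vadd.
  rewrite <- fsum_scal, <- !fsum_add. apply fsum_ext; intros; ring.
Qed.

Lemma vnorm2_scal {k} c (a : vec k) : vnorm2 (vscal c a) = c * c * vnorm2 a.
Proof. unfold vnorm2, vscal. rewrite <- fsum_scal. apply fsum_ext; intros; ring. Qed.

Lemma quad_disc A B C : (forall l, 0 <= A + 2 * l * B + l * l * C) -> B * B <= A * C.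
Proof.
  intros H. pose proof (H 0) as H0.
  destruct (Rtotal_order C 0) as [HC|[HC|HC]].
  - exfalso.
    pose proof (Rabs_pos A); pose proof (Rabs_pos B).
    set (K := Rabs A + 2 * Rabs B + 1).
    specialize (H (K / (- C) + 1)).
    set (m := K / (- C) + 1) in *.
    assert (Hm: m * C = - K + C) by (unfold m; field; lra).
    assert (1 <= m) by (unfold m; assert (0 <= K / - C) by (unfold Rdiv; apply Rle_mult_inv_pos; unfold K; lra); lra).
    pose proof (Rle_abs A). pose proof (Rle_abs B) as H5.
    assert (A + 2*m*B + m*m*C = A + 2*m*B + m * (m*C)) by ring.
    rewrite H6, Hm in H.
    assert (HmA : 1 * Rabs A <= m * Rabs A) by (apply Rmult_le_compat_r; lra).
    assert (HmB : m * B <= m * Rabs B) by (apply Rmult_le_compat_l; lra).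
    assert (m * (-K + C) = - m * (Rabs A + 2 * Rabs B) - m + m * C) by (unfold K; ring).
    nra.
  - subst C. destruct (Req_dec B 0) as [HB|HB].
    + subst. lra.
    + exfalso. specialize (H (-(A+1)/(2*B))).
      replace (A + 2 * (- (A + 1) / (2 * B)) * B + - (A + 1) / (2 * B) * (- (A + 1) / (2 * B)) * 0) with (-1) in H by (field; auto). lra.
  - specialize (H (- B / C)).
    set (m := - B / C) in *.
    assert (Hm : m * C = - B) by (unfold m; field; lra).
    assert (A + 2*m*B + m*m*C = A + 2*m*B + m*(m*C)) by ring.
    rewrite H1, Hm in H.
    assert (A - m * B >= 0) by nra.
    assert (B * B = - (m * C) * B) by (rewrite Hm; ring).
    nra.
Qed.

Lemma cauchy_schwarz {k} (a b : vec k) : vdot a b * vdot a b <= vnorm2 a * vnorm2 b.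
Proof.
  apply quad_disc. intro l.
  pose proof (vnorm2_ge0 (vadd a (vscal l b))).
  rewrite vnorm2_add, vnorm2_scal in H.
  unfold vdot, vscal in *. 
  replace (fsum k (fun i => a i * (l * b i))) with (l * fsum k (fun i => a i * b i)) in H.
  - lra.
  - rewrite <- fsum_scal. apply fsum_ext; intros; ring.
Qed.

Lemma vnorm_ge0 {k} (a : vec k) : 0 <= vnorm a.
Proof. apply sqrt_pos. Qed.

Lemma vnorm_sq {k} (a : vec k) : vnorm a * vnorm a = vnorm2 a.
Proof. apply sqrt_sqrt, vnorm2_ge0. Qed.

Lemma vnorm_triangle {k} (a b : vec k) : vnorm (vadd a b) <= vnorm a + vnorm b.
Proof.
  unfold vnorm at 1.
  rewrite <- (sqrt_square (vnorm a + vnorm b)).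
  2: pose proof (vnorm_ge0 a); pose proof (vnorm_ge0 b); lra.
  apply sqrt_le_1_alt.
  rewrite vnorm2_add.
  pose proof (cauchy_schwarz a b).
  pose proof (vnorm_sq a). pose proof (vnorm_sq b).
  pose proof (vnorm_ge0 a). pose proof (vnorm_ge0 b).
  assert (vdot a b <= vnorm a * vnorm b).
  { set (X := vnorm a * vnorm b). assert (0 <= X) by (apply Rmult_le_pos; auto).
    assert (vdot a b * vdot a b <= X * X) by (unfold X; nra).
    destruct (Rle_dec (vdot a b) X); auto. exfalso.
    assert (X * X < vdot a b * vdot a b) by (apply Rmult_le_0_lt_compat; lra). lra. }
  nra.
Qed.

Lemma vnorm_scal {k} c (a : vec k) : vnorm (vscal c a) = Rabs c * vnorm a.
Proof.
  unfold vnorm. rewrite vnorm2_scal, sqrt_mult_alt by nra.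
  rewrite <- sqrt_Rsqr_abs. reflexivity.
Qed.

Lemma vnorm_opp {k} (a : vec k) : vnorm (vopp a) = vnorm a.
Proof.
  replace (vopp a) with (vscal (-1) a) by vext.
  rewrite vnorm_scal, Rabs_left by lra; ring.
Qed.

Lemma vnorm_sub_sym {k} (a b : vec k) : vnorm (vsub a b) = vnorm (vsub b a).
Proof. replace (vsub a b) with (vopp (vsub b a)) by vext. apply vnorm_opp. Qed.

Lemma vnorm_vzero {k} : vnorm (@vzero k) = 0.
Proof.
  unfold vnorm, vnorm2. rewrite (fsum_ext _ _ (fun _ => 0 * 0)).
  - rewrite fsum_scal. rewrite Rmult_0_l. apply sqrt_0.
  - intros; unfold vzero; ring.
Qed.

Lemma vnorm_zero_eq {k} (a : vec k) : vnorm a = 0 -> a = vzero.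
Proof.
  intro H. unfold vnorm in H. apply sqrt_eq_0 in H; [|apply vnorm2_ge0].
  apply functional_extensionality; intro i. unfold vzero.
  pose proof (fsum_zero k (fun i => a i * a i) (fun i => ltac:(nra)) H i). simpl in H0. nra.
Qed.

Lemma vnorm_sub_tri {k} (a b c : vec k) : vnorm (vsub a c) <= vnorm (vsub a b) + vnorm (vsub b c).
Proof.
  replace (vsub a c) with (vadd (vsub a b) (vsub b c)) by vext. apply vnorm_triangle.
Qed.

Lemma vnorm_small_zero {k} (a : vec k) : (forall eps, 0 < eps -> vnorm a <= eps) -> a = vzero.
Proof.
  intro H. apply vnorm_zero_eq. pose proof (vnorm_ge0 a).
  destruct (Req_dec (vnorm a) 0); auto. specialize (H (vnorm a / 2) ltac:(lra)). lra.
Qed.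

Lemma vsub_zero_eq {k} (a b : vec k) : vsub a b = vzero -> a = b.
Proof.
  intro H. apply functional_extensionality; intro i.
  assert (vsub a b i = 0) by (rewrite H; reflexivity). unfold vsub in H0; lra.
Qed.

Lemma vnorm_head {k} (a : vec (S k)) : Rabs (a Fin.F1) <= vnorm a.
Proof.
  unfold vnorm. rewrite <- sqrt_Rsqr_abs. apply sqrt_le_1_alt.
  unfold vnorm2; simpl. pose proof (fsum_nonneg k (fun i => a (Fin.FS i) * a (Fin.FS i)) (fun i => ltac:(nra))).
  unfold Rsqr; lra.
Qed.

Lemma vnorm_tail {k} (a : vec (S k)) : vnorm (fun i => a (Fin.FS i)) <= vnorm a.
Proof.
  unfold vnorm. apply sqrt_le_1_alt. unfold vnorm2 at 2; simpl. fold (vnorm2 (fun i => a (Fin.FS i))). nra.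
Qed.

Lemma vnorm_coord {k} (a : vec k) i : Rabs (a i) <= vnorm a.
Proof.
  induction k.
  - inversion i.
  - apply (Fin.caseS' i (fun i => Rabs (a i) <= vnorm a)).
    + apply vnorm_head.
    + intro j. eapply Rle_trans; [apply (IHk (fun i => a (Fin.FS i)))|apply vnorm_tail].
Qed.

Lemma eps_N eps : 0 < eps -> exists N, forall n, (N <= n)%nat -> / (INR n + 1) < eps.
Proof.
  intro H. destruct (archimed_cor1 eps H) as [N [HN1 HN2]].
  exists N. intros n Hn.
  apply le_INR in Hn. assert (0 < INR N) by (apply lt_0_INR; auto).
  eapply Rle_lt_trans; [|exact HN1].
  apply Rinv_le_contravar; lra.
Qed.

Lemma inv_Sn_pos n : 0 < / (INR n + 1).
Proof. apply Rinv_0_lt_compat. pose proof (pos_INR n). lra. Qed.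

Lemma incr_ge (phi : nat -> nat) : (forall j, (phi j < phi (S j))%nat) -> forall j, (j <= phi j)%nat.
Proof. intros H j; induction j; [lia|]. specialize (H j); lia. Qed.

Lemma incr_mono (phi : nat -> nat) : (forall j, (phi j < phi (S j))%nat) -> forall i j, (i <= j)%nat -> (phi i <= phi j)%nat.
Proof. intros H i j Hij; induction Hij; [lia|]. specialize (H m); lia. Qed.

Lemma BW_R (u : nat -> R) M : (forall k, Rabs (u k) <= M) ->
  exists (phi : nat -> nat) l, (forall j, (phi j < phi (S j))%nat) /\ Un_cv (fun j => u (phi j)) l.
Proof.
  intro H.
  destruct (Bolzano_Weierstrass u (fun c => -M <= c <= M) (compact_P3 (-M) M)) as [l Hl].
  { intro n. specialize (H n). unfold Rabs in H. destruct (Rcase_abs (u n)); lra. }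
  assert (G: forall N j, {p | (N <= p)%nat /\ Rabs (u p - l) < / (INR j + 1)}).
  { intros N j. apply constructive_indefinite_description.
    destruct (Hl (disc l (mkposreal _ (inv_Sn_pos j))) N) as [p [Hp1 Hp2]].
    - exists (mkposreal _ (inv_Sn_pos j)). intros z Hz; exact Hz.
    - exists p; split; auto. }
  set (phi := fix phi j := match j with 0%nat => proj1_sig (G 0%nat 0%nat)
                            | S j' => proj1_sig (G (S (phi j')) (S j')) end).
  assert (H1 : forall j, (phi j < phi (S j))%nat).
  { intro j. simpl. pose proof (proj1 (proj2_sig (G (S (phi j)) (S j)))). simpl in H0. lia. }
  assert (H2 : forall j, Rabs (u (phi j) - l) < / (INR j + 1)).
  { intro j; destruct j; simpl.
    - exact (proj2 (proj2_sig (G 0%nat 0%nat))).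
    - exact (proj2 (proj2_sig (G (S (phi j)) (S j)))). }
  exists phi, l; split; auto.
  intros eps Heps. destruct (eps_N eps Heps) as [N HN].
  exists N; intros n Hn. unfold R_dist. specialize (H2 n). specialize (HN n Hn). lra.
Qed.

Definition vcons {k} (h : R) (t : vec k) : vec (S k) := fun i => Fin.caseS' i (fun _ => R) h t.

Lemma BW_vec p (w : nat -> vec p) M : (forall k, vnorm (w k) <= M) ->
  exists (phi : nat -> nat) l, (forall j, (phi j < phi (S j))%nat) /\ vcv (fun j => w (phi j)) l.
Proof.
  revert w M. induction p; intros w M H.
  - exists (fun j => j), vzero. split; [intro; lia|].
    intros eps Heps. exists 0%nat. intros n _. unfold R_dist, vnorm, vnorm2. simpl.
    rewrite sqrt_0. rewrite Rminus_0_r, Rabs_R0. auto.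
  - destruct (BW_R (fun k => w k Fin.F1) M) as [phi1 [l1 [Hp1 Hc1]]].
    { intro k. eapply Rle_trans; [apply vnorm_head| apply H]. }
    destruct (IHp (fun k => fun i => w (phi1 k) (Fin.FS i)) M) as [phi2 [l2 [Hp2 Hc2]]].
    { intro k. eapply Rle_trans; [apply vnorm_tail| apply H]. }
    exists (fun j => phi1 (phi2 j)), (vcons l1 l2). split.
    + intro j. pose proof (incr_mono phi1 Hp1 (S (phi2 j)) (phi2 (S j)) (Hp2 j)). specialize (Hp1 (phi2 j)). lia.
    + intros eps Heps.
      destruct (Hc1 (eps/2) ltac:(lra)) as [N1 HN1].
      destruct (Hc2 (eps/2) ltac:(lra)) as [N2 HN2].
      exists (max N1 N2). intros n Hn.
      specialize (HN2 n ltac:(lia)).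
      specialize (HN1 (phi2 n) ltac:(pose proof (incr_ge phi2 Hp2 n); lia)).
      unfold R_dist in *. rewrite Rminus_0_r in *.
      rewrite Rabs_pos_eq in HN2 by apply vnorm_ge0.
      rewrite Rabs_pos_eq by apply vnorm_ge0.
      unfold vnorm at 1, vnorm2. simpl. unfold vsub at 1. unfold vcons at 1. simpl.
      set (a := w (phi1 (phi2 n)) Fin.F1 - l1) in *.
      set (b := fsum p _).
      assert (Hb : b = vnorm2 (vsub (fun i => w (phi1 (phi2 n)) (Fin.FS i)) l2)) by reflexivity.
      assert (0 <= b) by (rewrite Hb; apply vnorm2_ge0).
      assert (sqrt b < eps / 2) by (rewrite Hb; exact HN2).
      apply Rle_lt_trans with (Rabs a + sqrt b); [|lra].
      rewrite <- (sqrt_square (Rabs a + sqrt b)) by (pose proof (Rabs_pos a); pose proof (sqrt_pos b); lra).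
      apply sqrt_le_1_alt.
      pose proof (sqrt_sqrt b H0). pose proof (Rabs_pos a). pose proof (sqrt_pos b).
      assert (a * a = Rabs a * Rabs a) by (unfold Rabs; destruct (Rcase_abs a); ring).
      change (vsub (w (phi1 (phi2 n))) (vcons l1 l2) Fin.F1) with a; nra.
Qed.

Lemma nchoice {A : Type} (Q : nat -> A -> Prop) : (forall k, exists x, Q k x) -> exists f : nat -> A, forall k, Q k (f k).
Proof.
  intro H. exists (fun k => proj1_sig (constructive_indefinite_description _ (H k))).
  intro k. exact (proj2_sig (constructive_indefinite_description _ (H k))).
Qed.

Lemma vcv_elim {k} (a : nat -> vec k) l : vcv a l -> forall eps, 0 < eps -> exists N, forall n, (N <= n)%nat -> vnorm (vsub (a n) l) < eps.
Proof.
  intros H eps He. destruct (H eps He) as [N HN]. exists N. intros n Hn.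
  specialize (HN n Hn). unfold R_dist in HN. rewrite Rminus_0_r, Rabs_pos_eq in HN by apply vnorm_ge0. auto.
Qed.

Lemma vcv_intro {k} (a : nat -> vec k) l : (forall eps, 0 < eps -> exists N, forall n, (N <= n)%nat -> vnorm (vsub (a n) l) < eps) -> vcv a l.
Proof.
  intros H eps He. destruct (H eps He) as [N HN]. exists N. intros n Hn.
  specialize (HN n Hn). unfold R_dist. rewrite Rminus_0_r, Rabs_pos_eq by apply vnorm_ge0. auto.
Qed.

Lemma closed_lim {k} (S : vec k -> Prop) (a : nat -> vec k) l :
  (forall z, vcl S z -> S z) -> (forall j, S (a j)) -> vcv a l -> S l.
Proof.
  intros Hc Ha Hv. apply Hc. intros eps He.
  destruct (vcv_elim a l Hv eps He) as [N HN]. exists (a N). split; auto.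
  rewrite vnorm_sub_sym. apply HN. lia.
Qed.

Lemma unit_lim {k} (a : nat -> vec k) l : (forall j, vnorm (a j) = 1) -> vcv a l -> vnorm l = 1.
Proof.
  intros H Hv.
  assert (forall eps, 0 < eps -> Rabs (vnorm l - 1) <= eps).
  { intros eps He. destruct (vcv_elim a l Hv eps He) as [N HN]. specialize (HN N (le_n _)).
    pose proof (vnorm_sub_tri l (a N) vzero). pose proof (vnorm_sub_tri (a N) l vzero).
    replace (vsub l vzero) with l in * by vext. replace (vsub (a N) vzero) with (a N) in * by vext.
    rewrite (vnorm_sub_sym l (a N)) in H0. rewrite H in *.
    apply Rabs_le; lra. }
  destruct (Req_dec (vnorm l) 1); auto. exfalso.
  specialize (H0 (Rabs (vnorm l - 1) / 2)).
  assert (0 < Rabs (vnorm l - 1)) by (apply Rabs_pos_lt; lra). specialize (H0 ltac:(lra)). lra.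
Qed.

Lemma unit_BW {k} (a : nat -> vec k) : (forall j, vnorm (a j) = 1) ->
  exists (phi : nat -> nat) l, (forall j, (phi j < phi (S j))%nat) /\ vcv (fun j => a (phi j)) l /\ vnorm l = 1.
Proof.
  intro H. destruct (BW_vec k a 1) as [phi [l [H1 H2]]].
  - intro; rewrite H; lra.
  - exists phi, l; repeat split; auto. apply (unit_lim (fun j => a (phi j))); auto.
Qed.

Lemma vnorm_pos_neq {k} (a : vec k) : 0 < vnorm a -> vnorm (vscal (/ vnorm a) a) = 1.
Proof. intro H. rewrite vnorm_scal, Rabs_pos_eq by (left; apply Rinv_0_lt_compat; auto). field. lra. Qed.

Lemma cone_closed_lim {p} (P : vec p -> Prop) a l : good_cone P -> (forall j, P (a j)) -> vcv a l -> P l.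
Proof. intros [_ [Hc _]]. apply closed_lim; auto. Qed.

Lemma interval_lemma {p} (P : vec p -> Prop) : good_cone P ->
  exists C, 0 < C /\ forall q a, P q -> P (vsub a q) -> vnorm q <= C * vnorm a.
Proof.
  intro HP. destruct (classic (exists C, 0 < C /\ forall q a, P q -> P (vsub a q) -> vnorm q <= C * vnorm a)) as [|Hn]; auto.
  exfalso.
  assert (forall k : nat, exists qa : vec p * vec p, P (fst qa) /\ P (vsub (snd qa) (fst qa)) /\ (INR k + 1) * vnorm (snd qa) < vnorm (fst qa)).
  { intro k. apply NNPP; intro Hk. apply Hn. exists (INR k + 1). split; [pose proof (pos_INR k); lra|].
    intros q a Hq Ha. apply Rnot_lt_le. intro Hl. apply Hk. exists (q, a); simpl; auto. }
  apply nchoice in H as [g Hg].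
  assert (Hpos : forall k, 0 < vnorm (fst (g k))).
  { intro k. destruct (Hg k) as [_ [_ H]]. pose proof (vnorm_ge0 (snd (g k))). pose proof (pos_INR k). nra. }
  set (u := fun k => vscal (/ vnorm (fst (g k))) (fst (g k))).
  set (b := fun k => vscal (/ vnorm (fst (g k))) (snd (g k))).
  assert (Hu1 : forall k, vnorm (u k) = 1) by (intro; apply vnorm_pos_neq; auto).
  destruct (unit_BW u Hu1) as [phi [l [Hphi [Hcv Hl]]]].
  destruct HP as [P0 [Pc [Padd [Pscal [Ppt _]]]]].
  assert (HPu : forall k, P (u k)) by (intro k; apply Pscal; [left; apply Rinv_0_lt_compat; auto| apply (Hg k)]).
  assert (Hbu : forall k, P (vsub (b k) (u k))).
  { intro k. replace (vsub (b k) (u k)) with (vscal (/ vnorm (fst (g k))) (vsub (snd (g k)) (fst (g k)))) by (unfold b, u; vext).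
    apply Pscal; [left; apply Rinv_0_lt_compat; auto| apply (Hg k)]. }
  assert (Hb : forall k, vnorm (b k) < / (INR k + 1)).
  { intro k. unfold b. rewrite vnorm_scal, Rabs_pos_eq by (left; apply Rinv_0_lt_compat; auto).
    destruct (Hg k) as [_ [_ H]]. pose proof (Hpos k). pose proof (pos_INR k).
    apply Rmult_lt_reg_l with (vnorm (fst (g k)) * (INR k + 1)); [nra|].
    field_simplify; [|lra|lra]. lra. }
  assert (P l) by (apply (closed_lim P (fun j => u (phi j)) l); auto).
  assert (P (vopp l)).
  { apply (closed_lim P (fun j => vsub (b (phi j)) (u (phi j))) (vopp l)); auto.
    apply vcv_intro. intros eps He.
    destruct (vcv_elim _ _ Hcv (eps/2) ltac:(lra)) as [N1 HN1].
    destruct (eps_N (eps/2) ltac:(lra)) as [N2 HN2].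
    exists (max N1 N2). intros n Hnn.
    replace (vsub (vsub (b (phi n)) (u (phi n))) (vopp l)) with (vadd (b (phi n)) (vopp (vsub (u (phi n)) l))) by vext.
    eapply Rle_lt_trans; [apply vnorm_triangle|]. rewrite vnorm_opp.
    specialize (HN1 n ltac:(lia)). specialize (HN2 (phi n) ltac:(pose proof (incr_ge phi Hphi n); lia)).
    specialize (Hb (phi n)). lra. }
  pose proof (Ppt l H H0). subst l. rewrite vnorm_vzero in Hl. lra.
Qed.

Lemma Ptrans {p} (P : vec p -> Prop) a b c : good_cone P -> P (vsub a b) -> P (vsub b c) -> P (vsub a c).
Proof.
  intros [_ [_ [Padd _]]] H1 H2. replace (vsub a c) with (vadd (vsub a b) (vsub b c)) by vext. auto.
Qed.

Lemma Prefl {p} (P : vec p -> Prop) a : good_cone P -> P (vsub a a).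
Proof. intros [P0 _]. replace (vsub a a) with (@vzero p) by vext. auto. Qed.

Lemma min_elem {p} (P : vec p -> Prop) (A : vec p -> Prop) z0 a0 B :
  good_cone P -> (forall z, vcl A z -> A z) -> A a0 -> P (vsub z0 a0) ->
  (forall a, A a -> P (vsub z0 a) -> vnorm a <= B) ->
  exists m, Eff A P m /\ P (vsub z0 m).
Proof.
  intros HP HA Ha0 Hz0 HB.
  set (Adm := fun w => A w /\ P (vsub z0 w)).
  assert (Step : forall w, exists u, Adm w -> Adm u /\ P (vsub w u) /\
            forall u', A u' -> P (vsub w u') -> vnorm (vsub w u') <= 2 * vnorm (vsub w u)).
  { intro w. destruct (classic (Adm w)) as [Hw|Hw]; [|exists w; tauto].
    destruct Hw as [Hw1 Hw2].
    set (E := fun r => exists u', A u' /\ P (vsub w u') /\ r = vnorm (vsub w u')).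
    assert (HEb : bound E).
    { exists (2 * B). intros r [u' [Hu1 [Hu2 ->]]].
      pose proof (HB u' Hu1 (Ptrans P _ _ _ HP Hw2 Hu2)). pose proof (HB w Hw1 Hw2).
      replace (vsub w u') with (vadd w (vopp u')) by vext.
      eapply Rle_trans; [apply vnorm_triangle|]. rewrite vnorm_opp. lra. }
    assert (HE0 : E 0) by (exists w; split; auto; split; [apply Prefl; auto| replace (vsub w w) with (@vzero p) by vext; rewrite vnorm_vzero; auto]).
    destruct (completeness E HEb (ex_intro _ 0 HE0)) as [F [HF1 HF2]].
    assert (0 <= F) by (apply HF1; auto).
    destruct (Req_dec F 0) as [HF0|HF0].
    - exists w. intros _. split; [split; auto|]. split; [apply Prefl; auto|].
      intros u' Hu1 Hu2. replace (vsub w w) with (@vzero p) by vext. rewrite vnorm_vzero.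
      assert (vnorm (vsub w u') <= F) by (apply HF1; exists u'; auto). lra.
    - assert (exists u, A u /\ P (vsub w u) /\ F / 2 < vnorm (vsub w u)) as [u [Hu1 [Hu2 Hu3]]].
      { apply NNPP; intro Hn. assert (F <= F / 2); [|lra]. apply HF2.
        intros r [u' [Hu1 [Hu2 ->]]]. apply Rnot_lt_le. intro. apply Hn. exists u'; auto. }
      exists u. intros _. split; [split; auto; apply (Ptrans P _ w); auto|]. split; auto.
      intros u' Hu1' Hu2'. assert (vnorm (vsub w u') <= F) by (apply HF1; exists u'; auto). lra. }
  assert (Hnx : exists nx : vec p -> vec p, forall w, Adm w -> Adm (nx w) /\ P (vsub w (nx w)) /\
            forall u', A u' -> P (vsub w u') -> vnorm (vsub w u') <= 2 * vnorm (vsub w (nx w))).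
  { exists (fun w => proj1_sig (constructive_indefinite_description _ (Step w))).
    intro w. exact (proj2_sig (constructive_indefinite_description _ (Step w))). }
  destruct Hnx as [nx Hnx].
  set (wk := fun k => Nat.iter k nx a0).
  assert (Hadm : forall k, Adm (wk k)).
  { induction k. - split; auto. - apply (Hnx (wk k) IHk). }
  assert (Hstep : forall k, P (vsub (wk k) (wk (S k)))) by (intro k; apply (Hnx (wk k) (Hadm k))).
  assert (Hdec : forall k j, (k <= j)%nat -> P (vsub (wk k) (wk j))).
  { intros k j Hkj. induction Hkj; [apply Prefl; auto|]. apply (Ptrans P _ (wk m)); auto. }
  destruct (BW_vec p wk B) as [phi [ws [Hphi Hcv]]].
  { intro k. apply HB; apply Hadm. }
  assert (HAws : A ws) by (apply (closed_lim A (fun j => wk (phi j))); auto; intro; apply Hadm).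
  assert (Hbelow : forall k, P (vsub (wk k) ws)).
  { intro k. apply (cone_closed_lim P (fun j => vsub (wk k) (wk (phi (k + j)%nat)))); auto.
    - intro j. apply Hdec. pose proof (incr_ge phi Hphi (k + j)). lia.
    - apply vcv_intro. intros eps He. destruct (vcv_elim _ _ Hcv eps He) as [N HN].
      exists N. intros n Hn. replace (vsub (vsub (wk k) (wk (phi (k + n)%nat))) (vsub (wk k) ws)) with (vopp (vsub (wk (phi (k+n)%nat)) ws)) by vext.
      rewrite vnorm_opp. apply HN. lia. }
  destruct (interval_lemma P HP) as [C [HC HCb]].
  assert (Hfull : forall eps, 0 < eps -> exists N, forall n, (N <= n)%nat -> vnorm (vsub (wk n) ws) < eps).
  { intros eps He. destruct (vcv_elim _ _ Hcv (eps / C) ltac:(apply Rdiv_lt_0_compat; auto)) as [N HN].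
    exists (phi N). intros n Hn.
    assert (vnorm (vsub (wk n) ws) <= C * vnorm (vsub (wk (phi N)) ws)).
    { apply HCb; auto. replace (vsub (vsub (wk (phi N)) ws) (vsub (wk n) ws)) with (vsub (wk (phi N)) (wk n)) by vext. auto. }
    specialize (HN N (le_n _)).
    assert (C * vnorm (vsub (wk (phi N)) ws) < C * (eps / C)) by (apply Rmult_lt_compat_l; auto).
    replace (C * (eps / C)) with eps in H0 by (field; lra). lra. }
  exists ws. split; [split; auto|].
  - intros z Hz [q [Hq ->]].
    apply vsub_zero_eq.
    replace (vsub (vsub ws q) ws) with (vopp q) by vext.
    replace q with (@vzero p); [vext|].
    symmetry. apply vnorm_small_zero. intros eps He.
    destruct (Hfull (eps / 5) ltac:(lra)) as [N HN].
    pose proof (HN N (le_n _)). pose proof (HN (S N) ltac:(lia)).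
    assert (HPq : P (vsub (wk N) (vsub ws q))).
    { apply (Ptrans P _ ws); auto. replace (vsub ws (vsub ws q)) with q by vext. auto. }
    destruct (Hnx (wk N) (Hadm N)) as [_ [_ Hmax]].
    specialize (Hmax _ Hz HPq).
    change (nx (wk N)) with (wk (S N)) in Hmax.
    pose proof (vnorm_sub_tri (wk N) ws (wk (S N))).
    rewrite (vnorm_sub_sym ws (wk (S N))) in H1.
    pose proof (vnorm_sub_tri ws (wk N) (vsub ws q)).
    rewrite (vnorm_sub_sym ws (wk N)) in H2.
    replace (vsub ws (vsub ws q)) with q in H2 by vext. lra.
  - apply (Ptrans P _ a0); auto. exact (Hbelow 0%nat).
Qed.

Lemma sqrt3_le a b c : 0 <= b -> 0 <= c -> sqrt (a * a + b + c) <= Rabs a + sqrt b + sqrt c.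
Proof.
  intros Hb Hc.
  rewrite <- (sqrt_square (Rabs a + sqrt b + sqrt c)) by (pose proof (Rabs_pos a); pose proof (sqrt_pos b); pose proof (sqrt_pos c); lra).
  apply sqrt_le_1_alt.
  pose proof (sqrt_sqrt b Hb). pose proof (sqrt_sqrt c Hc). pose proof (Rabs_pos a); pose proof (sqrt_pos b); pose proof (sqrt_pos c).
  assert (a * a = Rabs a * Rabs a) by (unfold Rabs; destruct (Rcase_abs a); ring).
  nra.
Qed.

Lemma tnorm_le {n p} a (b : vec n) (c : vec p) : tnorm a b c <= Rabs a + vnorm b + vnorm c.
Proof. apply sqrt3_le; apply vnorm2_ge0. Qed.

Lemma tnorm_ge {n p} a (b : vec n) (c : vec p) : Rabs a <= tnorm a b c /\ vnorm b <= tnorm a b c /\ vnorm c <= tnorm a b c.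
Proof.
  pose proof (vnorm2_ge0 b). pose proof (vnorm2_ge0 c).
  unfold tnorm, vnorm. repeat split; try (apply sqrt_le_1_alt; nra).
  rewrite <- sqrt_Rsqr_abs. apply sqrt_le_1_alt. unfold Rsqr. nra.
Qed.

Lemma pnorm_le {n} s (u : vec n) : pnorm (fun _ : Fin.t 1 => s) u <= Rabs s + vnorm u.
Proof.
  unfold pnorm. unfold vnorm2 at 1. simpl. replace (s * s + 0 + vnorm2 u) with (s * s + vnorm2 u + 0) by ring.
  pose proof (sqrt3_le s (vnorm2 u) 0 (vnorm2_ge0 u) (Rle_refl 0)). rewrite sqrt_0 in H. unfold vnorm. lra.
Qed.

Lemma pnorm_ge1 {a b} (u : vec a) (v : vec b) : vnorm u <= pnorm u v /\ vnorm v <= pnorm u v.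
Proof.
  pose proof (vnorm2_ge0 u). pose proof (vnorm2_ge0 v).
  unfold pnorm, vnorm. split; apply sqrt_le_1_alt; lra.
Qed.

Lemma vcl_idem {k} (S : vec k -> Prop) z : vcl (vcl S) z -> vcl S z.
Proof.
  intros H eps He. destruct (H (eps/2) ltac:(lra)) as [w [Hw1 Hw2]].
  destruct (Hw1 (eps/2) ltac:(lra)) as [w' [H1 H2]].
  exists w'. split; auto. pose proof (vnorm_sub_tri z w w'). lra.
Qed.

Lemma Un_cv_elim (u : nat -> R) : Un_cv u 0 -> forall eps, 0 < eps -> exists N, forall n, (N <= n)%nat -> Rabs (u n) < eps.
Proof. intros H eps He. destruct (H eps He) as [N HN]. exists N. intros n Hn. specialize (HN n Hn). unfold R_dist in HN. rewrite Rminus_0_r in HN. auto. Qed.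

Lemma Un_cv_intro (u : nat -> R) : (forall eps, 0 < eps -> exists N, forall n, (N <= n)%nat -> Rabs (u n) < eps) -> Un_cv u 0.
Proof. intros H eps He. destruct (H eps He) as [N HN]. exists N. intros n Hn. unfold R_dist. rewrite Rminus_0_r. auto. Qed.

Lemma Tgph_closed {n p} (G : R -> vec n -> vec p -> Prop) t x y tau v w :
  vcl (Tgph G t x y tau v) w -> Tgph G t x y tau v w.
Proof.
  intro Hw.
  assert (Hk : forall k : nat, exists q : R * R * vec n * vec p,
     0 < fst (fst (fst q)) /\ fst (fst (fst q)) < / (INR k + 1) /\
     tnorm (snd (fst (fst q)) - tau) (vsub (snd (fst q)) v) (vsub (snd q) w) < 4 * / (INR k + 1) /\
     G (t + fst (fst (fst q)) * snd (fst (fst q))) (vadd x (vscal (fst (fst (fst q))) (snd (fst q))))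
       (vadd y (vscal (fst (fst (fst q))) (snd q)))).
  { intro k. pose proof (inv_Sn_pos k) as Hk.
    destruct (Hw _ Hk) as [w' [[h [ta [vk [wk [Hh1 [Hh2 [Hc Hg]]]]]]] Hww']].
    destruct (Un_cv_elim h Hh2 _ Hk) as [N1 HN1].
    destruct (Un_cv_elim _ Hc _ Hk) as [N2 HN2].
    set (i := max N1 N2).
    exists (h i, ta i, vk i, wk i). simpl.
    specialize (HN1 i ltac:(lia)). specialize (HN2 i ltac:(lia)). specialize (Hh1 i).
    rewrite Rabs_pos_eq in HN1 by lra.
    rewrite Rabs_pos_eq in HN2 by (unfold tnorm; apply sqrt_pos).
    repeat split; auto.
    eapply Rle_lt_trans; [apply tnorm_le|].
    destruct (tnorm_ge (ta i - tau) (vsub (vk i) v) (vsub (wk i) w')) as [A1 [A2 A3]].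
    pose proof (vnorm_sub_tri (wk i) w' w). rewrite (vnorm_sub_sym w' w) in H.
    lra. }
  apply nchoice in Hk as [g Hg].
  exists (fun k => fst (fst (fst (g k)))), (fun k => snd (fst (fst (g k)))), (fun k => snd (fst (g k))), (fun k => snd (g k)).
  repeat split.
  - intro j; apply (Hg j).
  - apply Un_cv_intro. intros eps He. destruct (eps_N eps He) as [N HN]. exists N. intros m Hm.
    destruct (Hg m) as [H1 [H2 _]]. specialize (HN m Hm). rewrite Rabs_pos_eq by lra. lra.
  - apply Un_cv_intro. intros eps He. destruct (eps_N (eps/4) ltac:(lra)) as [N HN]. exists N. intros m Hm.
    destruct (Hg m) as [_ [_ [H3 _]]]. specialize (HN m Hm). rewrite Rabs_pos_eq by (unfold tnorm; apply sqrt_pos). lra.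
  - intro j; apply (Hg j).
Qed.

Lemma KB1 {n p} T (P : vec p -> Prop) (W : R -> vec n -> vec p -> Prop) t x y l dl Mf v d eta :
  0 <= t <= T -> 0 < l -> 0 < dl ->
  (forall t1 x1 t2 x2,
      0 <= t1 <= T -> 0 <= t2 <= T ->
      pnorm (fun _ : Fin.t 1 => t1 - t) (vsub x1 x) < dl ->
      pnorm (fun _ : Fin.t 1 => t2 - t) (vsub x2 x) < dl ->
      forall y1, W t1 x1 y1 -> exists y2, W t2 x2 y2 /\
        vnorm (vsub y1 y2) <= l * pnorm (fun _ : Fin.t 1 => t1 - t2) (vsub x1 x2)) ->
  vnorm v <= Mf -> 0 < vnorm d -> 0 < eta -> DWup T P W t x y 1 v d ->
  exists g om, 0 < g /\ g < eta /\ vsum_set (W t x) P (vadd y (vscal g om)) /\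
     vnorm (vsub om (vscal (/ vnorm d) d)) <= (1 + l * (Mf + 3)) / vnorm d.
Proof.
  intros Ht Hl Hdl HL Hv Hd Heta [h [ta [vk [wk [Hh1 [Hh2 [Hc Hg]]]]]]].
  assert (HMf : 0 <= Mf) by (pose proof (vnorm_ge0 v); lra).
  set (e0 := Rmin (eta / vnorm d) (dl / (Mf + 3))).
  assert (He0 : 0 < e0) by (apply Rmin_pos; apply Rdiv_lt_0_compat; lra).
  destruct (Un_cv_elim h Hh2 _ He0) as [N1 HN1].
  destruct (Un_cv_elim _ Hc 1 ltac:(lra)) as [N2 HN2].
  set (i := max N1 N2).
  specialize (HN1 i ltac:(lia)). specialize (HN2 i ltac:(lia)). specialize (Hh1 i). specialize (Hg i).
  rewrite Rabs_pos_eq in HN1 by lra.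
  rewrite Rabs_pos_eq in HN2 by (unfold tnorm; apply sqrt_pos).
  destruct (tnorm_ge (ta i - 1) (vsub (vk i) v) (vsub (wk i) d)) as [A1 [A2 A3]].
  unfold e0 in HN1. set (hh := h i) in *.
  assert (Hta : Rabs (ta i) <= 2).
  { pose proof (Rabs_triang (ta i - 1) 1). replace (ta i - 1 + 1) with (ta i) in H by ring. rewrite Rabs_R1 in H. lra. }
  assert (Hvk : vnorm (vk i) <= Mf + 1).
  { pose proof (vnorm_sub_tri (vk i) v vzero). replace (vsub (vk i) vzero) with (vk i) in H by vext.
    replace (vsub v vzero) with v in H by vext. lra. }
  assert (Hh_eta : hh < eta / vnorm d) by (pose proof (Rmin_l (eta / vnorm d) (dl / (Mf + 3))); lra).
  assert (Hh_dl : hh * (Mf + 3) < dl).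
  { pose proof (Rmin_r (eta / vnorm d) (dl / (Mf + 3))).
    assert (hh < dl / (Mf + 3)) by lra.
    apply Rmult_lt_compat_r with (r := Mf + 3) in H0; [|lra].
    replace (dl / (Mf + 3) * (Mf + 3)) with dl in H0 by (field; lra). lra. }
  destruct Hg as [Hgt [y1 [q [Hy1 [Hq Heq]]]]].
  assert (Hpn : pnorm (fun _ : Fin.t 1 => t + hh * ta i - t) (vsub (vadd x (vscal hh (vk i))) x) <= hh * (Mf + 3)).
  { eapply Rle_trans; [apply pnorm_le|].
    replace (vsub (vadd x (vscal hh (vk i))) x) with (vscal hh (vk i)) by vext.
    rewrite vnorm_scal. replace (t + hh * ta i - t) with (hh * ta i) by ring. rewrite Rabs_mult.
    rewrite Rabs_pos_eq by lra. nra. }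
  destruct (HL (t + hh * ta i) (vadd x (vscal hh (vk i))) t x Hgt Ht) with (y1 := y1) as [y2 [Hy2 Hyy]]; auto.
  { lra. }
  { eapply Rle_lt_trans; [apply pnorm_le|]. replace (t - t) with 0 by ring. rewrite Rabs_R0.
    replace (vsub x x) with (@vzero n) by vext. rewrite vnorm_vzero. lra. }
  set (g := hh * vnorm d).
  assert (Hg0 : 0 < g) by (unfold g; apply Rmult_lt_0_compat; lra).
  exists g, (vscal (/ g) (vsub (vadd y2 q) y)).
  split; auto. split.
  { unfold g. apply Rmult_lt_compat_r with (r := vnorm d) in Hh_eta; [|lra].
    replace (eta / vnorm d * vnorm d) with eta in Hh_eta by (field; lra). lra. }
  split.
  { exists y2, q. split; auto. split; auto. vext. field. lra. }
  replace (vsub (vscal (/ g) (vsub (vadd y2 q) y)) (vscal (/ vnorm d) d))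
     with (vscal (/ g) (vsub (vscal hh (vsub (wk i) d)) (vsub y1 y2))).
  2: { apply functional_extensionality; intro j.
       assert (Hj : vadd y (vscal hh (wk i)) j = vadd y1 q j) by (rewrite Heq; reflexivity).
       unfold vadd, vscal, vsub in *. unfold g. field_simplify; [|lra|lra]. 
       replace (hh * wk i j) with (y1 j + q j - y j) by lra. field. lra. }
  rewrite vnorm_scal, Rabs_pos_eq by (left; apply Rinv_0_lt_compat; auto).
  replace (vsub (vscal hh (vsub (wk i) d)) (vsub y1 y2)) with (vadd (vscal hh (vsub (wk i) d)) (vopp (vsub y1 y2))) by vext.
  pose proof (vnorm_triangle (vscal hh (vsub (wk i) d)) (vopp (vsub y1 y2))).
  rewrite vnorm_opp, vnorm_scal, Rabs_pos_eq in H by lra.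
  assert (vnorm (vsub y1 y2) <= l * (hh * (Mf + 3))) by (eapply Rle_trans; [exact Hyy| apply Rmult_le_compat_l; lra]).
  assert (Hnum : vnorm (vadd (vscal hh (vsub (wk i) d)) (vopp (vsub y1 y2))) <= hh * (1 + l * (Mf + 3))) by nra.
  apply Rmult_le_reg_l with g; auto.
  rewrite <- Rmult_assoc, Rinv_r, Rmult_1_l by lra.
  unfold g. replace (hh * vnorm d * ((1 + l * (Mf + 3)) / vnorm d)) with (hh * (1 + l * (Mf + 3))) by (field; lra).
  exact Hnum.
Qed.

Lemma inv_mono_nat i j : (i <= j)%nat -> / (INR j + 1) <= / (INR i + 1).
Proof. intro H. apply le_INR in H. pose proof (pos_INR i). apply Rinv_le_contravar; lra. Qed.

Lemma neg_lim {p} (P : vec p -> Prop) (u b : nat -> vec p) (phi : nat -> nat) l :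
  good_cone P -> (forall j, (phi j < phi (S j))%nat) -> vcv (fun j => u (phi j)) l ->
  (forall k, vnorm (b k) < / (INR k + 1)) -> (forall k, P (vsub (b k) (u k))) -> P (vopp l).
Proof.
  intros HP Hphi Hcv Hb Hbu.
  destruct HP as [P0 [Pc _]].
  apply (closed_lim P (fun j => vsub (b (phi j)) (u (phi j))) (vopp l)); auto.
  apply vcv_intro. intros eps He.
  destruct (vcv_elim _ _ Hcv (eps/2) ltac:(lra)) as [N1 HN1].
  destruct (eps_N (eps/2) ltac:(lra)) as [N2 HN2].
  exists (max N1 N2). intros n Hnn.
  replace (vsub (vsub (b (phi n)) (u (phi n))) (vopp l)) with (vadd (b (phi n)) (vopp (vsub (u (phi n)) l))) by vext.
  eapply Rle_lt_trans; [apply vnorm_triangle|]. rewrite vnorm_opp.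
  specialize (HN1 n ltac:(lia)). specialize (HN2 (phi n) ltac:(pose proof (incr_ge phi Hphi n); lia)).
  specialize (Hb (phi n)). lra.
Qed.

Lemma KB {n p} T (P : vec p -> Prop) (W : R -> vec n -> vec p -> Prop) t x y Mf :
  good_cone P -> 0 <= t <= T -> lipschitz_around T W t x -> 0 <= Mf ->
  (forall v, Tcone (vsum_set (W t x) P) y v -> P (vopp v) -> v = vzero) ->
  exists C, 0 <= C /\ forall v d z, vnorm v <= Mf -> DWup T P W t x y 1 v d -> P (vsub z d) ->
     vnorm d <= C * (1 + vnorm z).
Proof.
  intros HP Ht [l [dl [Hl [Hdl HL]]]] HMf HPE.
  apply NNPP; intro Hn.
  assert (Hk : forall k : nat, exists vdz : vec n * vec p * vec p,
     vnorm (fst (fst vdz)) <= Mf /\ DWup T P W t x y 1 (fst (fst vdz)) (snd (fst vdz)) /\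
     P (vsub (snd vdz) (snd (fst vdz))) /\ (INR k + 1) * (1 + vnorm (snd vdz)) < vnorm (snd (fst vdz))).
  { intro k. apply NNPP; intro Hk. apply Hn. exists (INR k + 1). split; [pose proof (pos_INR k); lra|].
    intros v d z Hv Hd Hz. apply Rnot_lt_le. intro Hlt. apply Hk. exists (v, d, z); simpl; auto. }
  apply nchoice in Hk as [gk Hgk].
  set (vv := fun k => fst (fst (gk k))). set (dd := fun k => snd (fst (gk k))). set (zz := fun k => snd (gk k)).
  assert (Hdpos : forall k, INR k + 1 < vnorm (dd k)).
  { intro k. destruct (Hgk k) as [_ [_ [_ H]]]. pose proof (vnorm_ge0 (zz k)). pose proof (pos_INR k).
    fold (dd k) (zz k) in H. nra. }
  assert (Hdpos' : forall k, 0 < vnorm (dd k)) by (intro k; pose proof (Hdpos k); pose proof (pos_INR k); lra).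
  set (Cst := 1 + l * (Mf + 3)).
  assert (HCst : 0 < Cst) by (unfold Cst; nra).
  assert (Hk2 : forall k : nat, exists gom : R * vec p, 0 < fst gom /\ fst gom < / (INR k + 1) /\
      vsum_set (W t x) P (vadd y (vscal (fst gom) (snd gom))) /\
      vnorm (vsub (snd gom) (vscal (/ vnorm (dd k)) (dd k))) <= Cst / vnorm (dd k)).
  { intro k. destruct (Hgk k) as [H1 [H2 _]].
    destruct (KB1 T P W t x y l dl Mf (vv k) (dd k) (/ (INR k + 1)) Ht Hl Hdl HL H1 (Hdpos' k) (inv_Sn_pos k) H2)
      as [g [om [A1 [A2 [A3 A4]]]]].
    exists (g, om); simpl; auto. }
  apply nchoice in Hk2 as [go Hgo].
  set (u := fun k => vscal (/ vnorm (dd k)) (dd k)).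
  assert (Hu1 : forall k, vnorm (u k) = 1) by (intro; apply vnorm_pos_neq; auto).
  destruct (unit_BW u Hu1) as [phi [ul [Hphi [Hcv Hul]]]].
  assert (HT : Tcone (vsum_set (W t x) P) y ul).
  { exists (fun j => fst (go (phi j))), (fun j => snd (go (phi j))). repeat split.
    - intro j; apply (Hgo (phi j)).
    - apply Un_cv_intro. intros eps He. destruct (eps_N eps He) as [N HN]. exists N. intros m Hm.
      destruct (Hgo (phi m)) as [B1 [B2 _]]. pose proof (inv_mono_nat m (phi m) (incr_ge phi Hphi m)).
      specialize (HN m Hm). rewrite Rabs_pos_eq by lra. lra.
    - apply vcv_intro. intros eps He.
      destruct (vcv_elim _ _ Hcv (eps/2) ltac:(lra)) as [N1 HN1].
      destruct (eps_N (eps / 2 / Cst) ltac:(apply Rdiv_lt_0_compat; lra)) as [N2 HN2].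
      exists (max N1 N2). intros m Hm.
      specialize (HN1 m ltac:(lia)). specialize (HN2 (phi m) ltac:(pose proof (incr_ge phi Hphi m); lia)).
      destruct (Hgo (phi m)) as [_ [_ [_ B4]]].
      pose proof (vnorm_sub_tri (snd (go (phi m))) (u (phi m)) ul).
      assert (Cst / vnorm (dd (phi m)) < eps / 2).
      { pose proof (Hdpos (phi m)). pose proof (pos_INR (phi m)).
        apply Rle_lt_trans with (Cst * / (INR (phi m) + 1)).
        - unfold Rdiv. apply Rmult_le_compat_l; [lra|]. apply Rinv_le_contravar; lra.
        - apply Rmult_lt_compat_l with (r := Cst) in HN2; auto.
          replace (Cst * (eps / 2 / Cst)) with (eps / 2) in HN2 by (field; lra). lra. }
      fold (u (phi m)) in B4. lra.
    - intro j; apply (Hgo (phi j)). }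
  assert (HPn : P (vopp ul)).
  { apply (neg_lim P u (fun k => vscal (/ vnorm (dd k)) (zz k)) phi ul HP Hphi Hcv).
    - intro k. rewrite vnorm_scal, Rabs_pos_eq by (left; apply Rinv_0_lt_compat; auto).
      destruct (Hgk k) as [_ [_ [_ H]]]. fold (dd k) (zz k) in H.
      pose proof (vnorm_ge0 (zz k)). pose proof (pos_INR k). pose proof (Hdpos' k).
      apply Rmult_lt_reg_l with (vnorm (dd k) * (INR k + 1)); [nra|].
      field_simplify; [|lra|lra]. nra.
    - intro k. replace (vsub (vscal (/ vnorm (dd k)) (zz k)) (u k)) with (vscal (/ vnorm (dd k)) (vsub (zz k) (dd k))) by (unfold u; vext).
      destruct HP as [_ [_ [_ [Pscal _]]]]. apply Pscal; [left; apply Rinv_0_lt_compat; auto|].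
      destruct (Hgk k) as [_ [_ [H _]]]. exact H. }
  pose proof (HPE ul HT HPn). subst ul. rewrite vnorm_vzero in Hul. lra.
Qed.

Lemma fold_bound {a b k} (S : vec a * vec b -> Prop) (pr : vec a * vec b -> vec k) M :
  0 <= M -> (forall w, S w -> vnorm (pr w) <= M) ->
  forall l : list (R * (vec a * vec b)), (forall c, In c l -> 0 <= fst c /\ S (snd c)) ->
  vnorm (fold_right (fun c s => vadd (vscal (fst c) (pr (snd c))) s) vzero l) <= fold_right (fun c s => fst c + s) 0 l * M.
Proof.
  intros HM HS l. induction l as [|c l IH]; intro Hl; simpl.
  - rewrite vnorm_vzero. lra.
  - eapply Rle_trans; [apply vnorm_triangle|].
    destruct (Hl c (or_introl eq_refl)) as [Hc1 Hc2].
    rewrite vnorm_scal, Rabs_pos_eq by auto.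
    specialize (IH (fun c' H => Hl c' (or_intror H))). specialize (HS _ Hc2).
    assert (fst c * vnorm (pr (snd c)) <= fst c * M) by (apply Rmult_le_compat_l; auto). lra.
Qed.

Lemma FL_bound {n m p} (U : vec m -> Prop) (f : vec n -> vec m -> vec n) (L : vec n -> vec m -> vec p) x Mf ML :
  0 <= Mf -> 0 <= ML -> (forall u, U u -> vnorm (f x u) <= Mf) -> (forall u, U u -> vnorm (L x u) <= ML) ->
  forall fv Lv, FL U f L x (fv, Lv) -> vnorm fv <= Mf + 1 /\ vnorm Lv <= ML + 1.
Proof.
  intros HMf HML Hf HL fv Lv H.
  destruct (H 1 ltac:(lra)) as [w [[l [_ [Hl [Hs [Hw1 Hw2]]]]] Hpn]].
  simpl in Hpn. destruct (pnorm_ge1 (vsub fv (fst w)) (vsub Lv (snd w))) as [P1 P2].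
  assert (B1 : vnorm (fst w) <= Mf).
  { rewrite Hw1. eapply Rle_trans.
    - apply (fold_bound (fun z => exists u, U u /\ z = (f x u, L x u)) (fun z => fst z) Mf HMf); [|exact Hl].
      intros z [u [Hu ->]]. simpl. auto.
    - rewrite Hs. lra. }
  assert (B2 : vnorm (snd w) <= ML).
  { rewrite Hw2. eapply Rle_trans.
    - apply (fold_bound (fun z => exists u, U u /\ z = (f x u, L x u)) (fun z => snd z) ML HML); [|exact Hl].
      intros z [u [Hu ->]]. simpl. auto.
    - rewrite Hs. lra. }
  pose proof (vnorm_sub_tri fv (fst w) vzero). pose proof (vnorm_sub_tri Lv (snd w) vzero).
  replace (vsub fv vzero) with fv in H0 by vext. replace (vsub (fst w) vzero) with (fst w) in H0 by vext.
  replace (vsub Lv vzero) with Lv in H1 by vext. replace (vsub (snd w) vzero) with (snd w) in H1 by vext.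
  lra.
Qed.

Theorem proposition6p3 (T : R) (n m p : nat) (U : vec m -> Prop)
  (f : vec n -> vec m -> vec n) (L : vec n -> vec m -> vec p)
  (P : vec p -> Prop) (W : R -> vec n -> vec p -> Prop)
  (t : R) (x : vec n) (y : vec p) :
  0 < T -> (1 <= n)%nat -> (1 <= m)%nat -> (1 <= p)%nat ->
  nonempty_compact U -> MOC_regular U f -> MOC_regular U L ->
  good_cone P ->
  gen_contingent_solution T U f L P W ->
  0 <= t < T -> W t x y ->
  lipschitz_around T W t x ->
  PEff (W t x) P y ->
  vsum_set
    (Eff (vcl (fun z => exists fv Lv d, FL U f L x (fv, Lv) /\
                 DupW T P W t x y 1 fv d /\ z = vadd Lv d)) P)
    P vzero.
Proof.
  intros HT Hn Hm Hp HU Hf HL HP Hgcs Ht Hy Hlip HPE.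
  destruct Hgcs as [Hext [Hi [Hii HTT]]].
  destruct Hf as [_ [[Mf0 HMf0] _]]. destruct HL as [_ [[ML0 HML0] _]].
  set (Mf := Rabs Mf0). set (ML := Rabs ML0).
  assert (HMf : 0 <= Mf) by apply Rabs_pos. assert (HML : 0 <= ML) by apply Rabs_pos.
  assert (Hfb : forall u, U u -> vnorm (f x u) <= Mf) by (intros; eapply Rle_trans; [apply HMf0; auto| apply Rle_abs]).
  assert (HLb : forall u, U u -> vnorm (L x u) <= ML) by (intros; eapply Rle_trans; [apply HML0; auto| apply Rle_abs]).
  pose proof (FL_bound U f L x Mf ML HMf HML Hfb HLb) as HFL.
  destruct HPE as [_ HPE].
  destruct (KB T P W t x y (Mf + 1) HP ltac:(lra) Hlip ltac:(lra) HPE) as [C [HC0 HC]].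
  destruct (Hi t x y Ht Hy) as [fb [Lb [HFb HDb]]].
  destruct (min_elem P (DWup T P W t x y 1 fb) (vopp Lb) (vopp Lb) (C * (1 + vnorm (vopp Lb))) HP)
    as [e [He1 He2]].
  - intros z Hz. apply Tgph_closed. exact Hz.
  - exact HDb.
  - apply Prefl; auto.
  - intros a Ha Hpa. apply (HC fb a (vopp Lb)); auto. apply (proj1 (HFL fb Lb HFb)).
  - set (Sset := fun z => exists fv Lv d, FL U f L x (fv, Lv) /\ DupW T P W t x y 1 fv d /\ z = vadd Lv d).
    destruct (min_elem P (vcl Sset) vzero (vadd Lb e) (1 + (ML + 1) + C * (1 + (ML + 2))) HP) as [s [Hs1 Hs2]].
    + intros z Hz. apply vcl_idem; auto.
    + intros eps He. exists (vadd Lb e). split.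
      * exists fb, Lb, e. repeat split; auto; apply He1.
      * replace (vsub (vadd Lb e) (vadd Lb e)) with (@vzero p) by vext. rewrite vnorm_vzero. auto.
    + replace (vsub vzero (vadd Lb e)) with (vsub (vopp Lb) e) by vext. exact He2.
    + intros a Ha Hpa. destruct (Ha 1 ltac:(lra)) as [s' [[fv [Lv [d [HF [Hd ->]]]]] Hds]].
      destruct (HFL fv Lv HF) as [Hfv HLv].
      set (z := vadd (vopp Lv) (vsub (vadd Lv d) a)).
      assert (Hdz : vnorm d <= C * (1 + vnorm z)).
      { apply (HC fv d z Hfv (proj1 Hd)). unfold z.
        replace (vsub (vadd (vopp Lv) (vsub (vadd Lv d) a)) d) with (vsub vzero a) by vext. exact Hpa. }
      assert (Hz : vnorm z <= ML + 2).
      { unfold z. eapply Rle_trans; [apply vnorm_triangle|]. rewrite vnorm_opp.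
        rewrite vnorm_sub_sym in Hds. lra. }
      assert (vnorm d <= C * (1 + (ML + 2))).
      { eapply Rle_trans; [exact Hdz|]. apply Rmult_le_compat_l; lra. }
      pose proof (vnorm_sub_tri a (vadd Lv d) vzero).
      replace (vsub a vzero) with a in H0 by vext. replace (vsub (vadd Lv d) vzero) with (vadd Lv d) in H0 by vext.
      pose proof (vnorm_triangle Lv d). lra.
    + exists s, (vsub vzero s). split; [exact Hs1|]. split; [exact Hs2| vext].
Qed.
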